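(* Let $n\ge 2$ and $m=n-1$. Let $\overline{Q}_1\subseteq\mathbb{R}^{m^2}\times\mathbb{R}^{nm}$ be the set of all $(w,y)$, with $w=(w_{ir})_{i,r\in\{1,\dots,m\}}$ and $y=(y_{ij})$ indexed by ordered pairs $(i,j)$ of distinct elements of $C=\{0,1,\dots,m\}$, satisfying (1) $\sum_{r=1}^m w_{ir}=1$ for $i=1,\dots,m$; (2) $\sum_{i=1}^m w_{ir}=1$ for $r=1,\dots,m$; (3) $w_{ir}\ge 0$ for all $i,r\in\{1,\dots,m\}$; (4) $y_{0,i}-w_{i,1}=0$ for $i=1,\dots,m$; (5) $y_{i,0}-w_{i,m}=0$ for $i=1,\dots,m$; (6) $w_{ir}+w_{j,r+1}-y_{ij}\le 1$ for all $i,j\in\{1,\dots,m\}$ with $i\ne j$ and all $r\in\{1,\dots,m-1\}$; (7) $\sum_{i=1}^m\sum_{j=1,j\ne i}^m y_{ij}=m-1$; (8) $y_{ij}\ge 0$ for all distinct $i,j\in\{0,\dots,m\}$. Then $\overline{Q}_1$ is an extended formulation of $\mathcal{A}_n$, i.e. $\pi_w(\overline{Q}_1)=\{w: \exists y,\ (w,y)\in\overline{Q}_1\}=\mathcal{A}_n$.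
   Context: $\mathcal{A}_n$ denotes the linear assignment (Birkhoff) polytope in $\mathbb{R}^{m^2}$: the set of $w=(w_{ir})_{i,r=1}^m$ satisfying constraints (1)–(3). $\pi_w$ denotes projection onto the $w$-coordinates. *)

(* Defs.v *)
From mathcomp Require Import all_boot all_order all_algebra.
From mathcomp Require Import reals.
Set Implicit Arguments. Unset Strict Implicit. Unset Printing Implicit Defensive.
Import Order.TTheory GRing.Theory Num.Theory.
Local Open Scope ring_scope.

(* Conventions: n = m.+1.  Indices {1,...,m} of the paper are represented by
   'I_m (paper index i corresponds to ordinal with value i-1).
   The set C = {0,...,m} is represented by 'I_m.+1, with paper index k
   corresponding to the ordinal of value k; paper index i in {1..m} is
   thus [lift ord0 i] for i : 'I_m.  y is a function on all pairs of C;
   only off-diagonal entries are constrained (diagonal values are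
   meaningless coordinates and play no role). *)

Definition assignment_polytope (R : realType) (m : nat)
    (w : 'M[R]_m) : Prop :=
  [/\ (forall i : 'I_m, \sum_(r < m) w i r = 1),
      (forall r : 'I_m, \sum_(i < m) w i r = 1) &
      (forall i r : 'I_m, 0 <= w i r)].

Definition toC (m : nat) (i : 'I_m) : 'I_m.+1 := lift ord0 i.

Definition Q1bar (R : realType) (m : nat)
    (w : 'M[R]_m) (y : 'I_m.+1 -> 'I_m.+1 -> R) : Prop :=
  assignment_polytope w /\ [/\
      (forall i : 'I_m, forall r1 : 'I_m, val r1 = 0%N ->
          y ord0 (toC i) - w i r1 = 0),
      (forall i : 'I_m, forall rm : 'I_m, val rm = m.-1 ->
          y (toC i) ord0 - w i rm = 0),
      (forall i j : 'I_m, i != j -> forall r r' : 'I_m, val r' = (val r).+1 ->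
          w i r + w j r' - y (toC i) (toC j) <= 1),
      \sum_(i < m) \sum_(j < m | j != i) y (toC i) (toC j) = m.-1%:R &
      (forall k l : 'I_m.+1, k != l -> 0 <= y k l)].

(* Main.v *)
Require Import Defs.
From mathcomp Require Import all_boot all_order all_algebra.
From mathcomp Require Import reals.
From mathcomp Require Import ring lra.
Import Order.TTheory GRing.Theory Num.Theory.
Local Open Scope ring_scope.
Set Implicit Arguments.

Section H.
Variable R : realType.
Variable k : nat.
Variable w : 'M[R]_k.+1.

Definition Lf (i j : 'I_k.+1) : R :=
  \sum_(r < k) w i (widen_ord (leqnSn k) r) * w j (lift ord0 r).

Definition slack : R :=
  k%:R - \sum_(i < k.+1) \sum_(j < k.+1 | j != i) Lf i j.

Definition yf (a b : 'I_k.+2) : R :=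
  match unlift ord0 a, unlift ord0 b with
  | None, Some j => \sum_(r < k.+1 | val r == 0%N) w j r
  | Some i, None => \sum_(r < k.+1 | val r == k) w i r
  | Some i, Some j => if i == j then 0 else
      Lf i j + slack * ((i == ord0) && (j == ord_max))%:R
  | None, None => 0
  end.

Hypothesis hw : assignment_polytope w.

Lemma w_ge0 i r : 0 <= w i r.
Proof. by case: hw. Qed.

Lemma w_le1 i r : w i r <= 1.
Proof.
case: hw => h1 _ h3; rewrite -(h1 i) (bigD1 r) //= lerDl.
by apply: sumr_ge0 => j _; apply: h3.
Qed.

Lemma Lf_ge0 i j : 0 <= Lf i j.
Proof. by apply: sumr_ge0 => r _; apply: mulr_ge0; apply: w_ge0. Qed.

Lemma sumL_all : \sum_(i < k.+1) \sum_(j < k.+1) Lf i j = k%:R.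
Proof.
case: hw => _ h2 _.
rewrite /Lf.
under eq_bigr => i _ do rewrite exchange_big /=.
rewrite exchange_big /=.
under eq_bigr => r _ do (under eq_bigr => i _ do rewrite -mulr_sumr; rewrite -mulr_suml h2 h2 mulr1).
by rewrite sumr_const card_ord.
Qed.

Lemma slack_ge0 : 0 <= slack.
Proof.
rewrite /slack subr_ge0 -sumL_all; apply: ler_sum => i _.
rewrite [X in _ <= X](bigD1 i) //= lerDr; exact: Lf_ge0.
Qed.

End H.

Theorem lemma1 (R : realType) (m : nat) (hm : (1 <= m)%N) (w : 'M[R]_m) :
  (exists y : 'I_m.+1 -> 'I_m.+1 -> R, Q1bar w y) <-> assignment_polytope w.
Proof.
split; first by case=> y [].
case: m hm w => // k _ w hw.
exists (@yf R k w); split => //; split.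
- move=> i r1 hr1; rewrite /yf /toC unlift_none liftK.
  rewrite (big_pred1 r1) ?subrr // => r /=; apply/eqP/eqP; first by move=> h; apply: val_inj; rewrite /= h -hr1.
  by move->.
- move=> i rm hrm; rewrite /yf /toC unlift_none liftK.
  rewrite (big_pred1 rm) ?subrr // => r /=; apply/eqP/eqP; first by move=> h; apply: val_inj; rewrite /= h hrm.
  by move->.
- move=> i j hij r r' hr'; rewrite /yf /toC !liftK (negbTE hij).
  have hrk : (val r < k)%N by rewrite -ltnS -hr' ltn_ord.
  set r0 := Ordinal hrk.
  have e1 : widen_ord (leqnSn k) r0 = r by apply: val_inj.
  have e2 : lift ord0 r0 = r' by apply: val_inj; rewrite /= /bump /= hr'.
  have hL : w i r * w j r' <= @Lf R k w i j.
    rewrite /Lf (bigD1 r0) //= e1 e2 lerDl; apply: sumr_ge0 => q _.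
    by apply: mulr_ge0; apply: w_ge0.
  have hs := slack_ge0 hw.
  have hind : 0 <= @slack R k w * ((i == ord0) && (j == ord_max))%:R by apply: mulr_ge0.
  have a0 := w_ge0 hw i r; have a1 := w_le1 hw i r.
  have b0 := w_ge0 hw j r'; have b1 := w_le1 hw j r'.
  nra.
- rewrite /yf /toC.
  under eq_bigr => i _ do under eq_bigr => j hj do rewrite !liftK eq_sym (negbTE hj).
  under eq_bigr => i _ do rewrite big_split /=.
  rewrite big_split /=.
  set S := (X in _ + X = _).
  have hS : S = @slack R k w * (0 < k)%:R.
    rewrite /S; clear S; case: k w hw => [|k'] w' hw' /=.
      rewrite mulr0; apply: big1 => i _; apply: big1 => j hj.
      by exfalso; move: hj; rewrite !ord1.
    rewrite mulr1 (bigD1 ord0) //= (bigD1 ord_max) //= eqxx mulr1.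
    rewrite big1 ?addr0; last by move=> j /andP [_ hj]; rewrite (negbTE hj) ?andbF ?mulr0.
    rewrite big1 ?addr0 // => i hi; apply: big1 => j _; by rewrite (negbTE hi) mulr0.
  rewrite hS; clear hS S; case: k w hw => [|k'] w' hw' /=.
    rewrite mulr0 addr0; apply: big1 => i _; apply: big1 => j hj.
    by exfalso; move: hj; rewrite !ord1.
  by rewrite mulr1 /slack addrC subrK.
- move=> a b hab; rewrite /yf.
  case: (unlift ord0 a) => [i|]; case: (unlift ord0 b) => [j|] //.
  + case: eqP => _ //; apply: addr_ge0; first exact: Lf_ge0.
    by apply: mulr_ge0; [exact: slack_ge0|].
  + by apply: sumr_ge0 => r _; apply: w_ge0.
  + by apply: sumr_ge0 => r _; apply: w_ge0.
Qed.
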